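(* Let $f:\mathbb{R}^n\to\mathbb{R}$ be $\mathcal C^2$, $\mu$-strongly convex, with $L$-Lipschitz gradient ($0<\mu<L$) and $\eta$-Lipschitz Hessian, let $x_0\in\mathbb{R}^n$, $k\ge1$ an integer, $\rho=1-\frac{\mu}{L}$, and define for $C\ge1$ $$\hat\rho(C)=\tilde\rho(C)+3\frac{\eta}{L^2}\|\nabla f(x_0)\|k^2C^2.$$ Let $C_0=\frac{2+\rho^k}{2-\rho^k}$ and $a=\frac{\eta}{L^2}\|\nabla f(x_0)\|$. Then: (i) if $a<\frac{\rho^k(1-\rho^k)(2-\rho^k)}{3k^2(2+\rho^k)^2}$, there exists a nonempty interval $I$ containing $C_0$ such that $\hat\rho(C)<\rho^k$ for $C\in I$; (ii) if $a<\min\big(\frac{\rho^k(1-\rho^k)(2-\rho^k)}{3k^2(2+\rho^k)^2},\frac{\rho^k-\rho_1}{3k^2C_1^2}\big)$, then $\hat\rho(C)<\rho^k$ for $C\in[C_0,C_1]$; (iii) if $a<\min\big(\frac{\rho^k(1-\rho^k)(2-\rho^k)}{3k^2(2+\rho^k)^2},\frac{\rho^k-\rho_*}{3k^2C_*^2}\big)$, then $\hat\rho(C)<\rho^k$ for $C\in[C_0,C_*]$.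
   Context: $\mathbb{R}_k[X]$ denotes real polynomials of degree at most $k$; $\|p\|_1$ is the sum of absolute values of coefficients of $p$. $\tilde\rho(C)=\min\{\max_{x\in[0,\rho]}|p(x)|:p\in\mathbb{R}_k[X],\ p(1)=1,\ \|p\|_1\le C\}$. $T_k$ is the first-kind Chebyshev polynomial of degree $k$; $C_*=\|p_*\|_1$ with $p_*(X)=T_k(\frac{2X-\rho}{\rho})/|T_k(\frac{2-\rho}{\rho})|$; $\rho_*=\frac{2\beta^k}{1+\beta^{2k}}$ with $\beta=\frac{1-\sqrt{1-\rho}}{1+\sqrt{1-\rho}}$; $\beta_\rho=\frac{\sqrt{1+\rho}-\sqrt{1-\rho}}{\sqrt{1+\rho}+\sqrt{1-\rho}}$, $\rho_1=\frac{2\beta_\rho^k}{1+\beta_\rho^{2k}}$, $C_1=\frac{\rho_1}{2\rho^k}\big((1-\sqrt{1+\rho^2})^k+(1+\sqrt{1+\rho^2})^k\big)$. *)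

(* Defs.v *)
From HB Require Import structures.
From mathcomp Require Import all_boot all_order all_algebra.
From mathcomp Require Import all_classical all_reals all_analysis.
Set Implicit Arguments. Unset Strict Implicit. Unset Printing Implicit Defensive.
Import Order.TTheory GRing.Theory Num.Theory.
Import numFieldNormedType.Exports.
Local Open Scope classical_set_scope.
Local Open Scope ring_scope.

Section Defs.
Variable R : realType.

Definition dotv n (u v : 'rV[R]_n) : R := \sum_(i < n) u 0 i * v 0 i.
Definition enorm n (v : 'rV[R]_n) : R := Num.sqrt (\sum_(i < n) v 0 i ^+ 2).

Definition partial n (f : 'rV[R]_n -> R) (i : 'I_n) (x : 'rV[R]_n) : R :=
  'D_(delta_mx 0 i) f x.
Definition grad n (f : 'rV[R]_n -> R) (x : 'rV[R]_n) : 'rV[R]_n :=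
  \row_i partial f i x.
Definition hessian n (f : 'rV[R]_n -> R) (x : 'rV[R]_n) : 'M[R]_n :=
  \matrix_(i, j) partial (partial f j) i x.

Definition is_C2 n (f : 'rV[R]_n -> R) : Prop :=
  [/\ forall x, differentiable f x,
      forall j x, differentiable (partial f j) x &
      forall i j, continuous (partial (partial f j) i)].

Definition strongly_convex n (mu : R) (f : 'rV[R]_n -> R) : Prop :=
  forall x y, f x + dotv (grad f x) (y - x) + mu / 2 * enorm (y - x) ^+ 2 <= f y.

Definition lipschitz_grad n (L : R) (f : 'rV[R]_n -> R) : Prop :=
  forall x y, enorm (grad f x - grad f y) <= L * enorm (x - y).

(* operator-norm (Euclidean) Lipschitz bound on the Hessian, written out *)
Definition lipschitz_hessian n (eta : R) (f : 'rV[R]_n -> R) : Prop :=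
  forall x y v, enorm (v *m (hessian f x - hessian f y)) <= eta * enorm (x - y) * enorm v.

Definition norm1 (p : {poly R}) : R := \sum_(i < size p) `|p`_i|.

Definition supabs (rho : R) (p : {poly R}) : R :=
  sup [set y | exists2 x, 0 <= x <= rho & y = `|p.[x]|].

Definition rho_tilde (k : nat) (rho C : R) : R :=
  inf [set m | exists p : {poly R},
         [/\ (size p <= k.+1)%N, p.[1] = 1, norm1 p <= C & m = supabs rho p]].

Fixpoint cheb_pair (k : nat) : {poly R} * {poly R} :=
  match k with
  | 0%N => (1, 'X)
  | k'.+1 => let: (a, b) := cheb_pair k' in (b, 2%:P * 'X * b - a)
  end.
Definition cheb (k : nat) : {poly R} := (cheb_pair k).1.

Definition p_star (k : nat) (rho : R) : {poly R} :=
  `|(cheb k).[(2 - rho) / rho]|^-1 *: ((cheb k) \Po ((2 / rho) *: 'X - 1)).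
Definition C_star (k : nat) (rho : R) : R := norm1 (p_star k rho).

Definition beta_ (rho : R) : R :=
  (1 - Num.sqrt (1 - rho)) / (1 + Num.sqrt (1 - rho)).
Definition rho_star (k : nat) (rho : R) : R :=
  2 * beta_ rho ^+ k / (1 + beta_ rho ^+ (2 * k)).

Definition beta_rho (rho : R) : R :=
  (Num.sqrt (1 + rho) - Num.sqrt (1 - rho)) / (Num.sqrt (1 + rho) + Num.sqrt (1 - rho)).
Definition rho_1 (k : nat) (rho : R) : R :=
  2 * beta_rho rho ^+ k / (1 + beta_rho rho ^+ (2 * k)).
Definition C_1 (k : nat) (rho : R) : R :=
  rho_1 k rho / (2 * rho ^+ k) *
  ((1 - Num.sqrt (1 + rho ^+ 2)) ^+ k + (1 + Num.sqrt (1 + rho ^+ 2)) ^+ k).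

(* rho^(C) = rho~(C) + 3 a k^2 C^2 with a = eta/L^2 ||grad f(x0)|| *)
Definition rho_hat (k : nat) (rho a C : R) : R :=
  rho_tilde k rho C + 3 * a * (k%:R) ^+ 2 * C ^+ 2.

End Defs.

(* Main.v *)
Require Import Defs.
From HB Require Import structures.
From mathcomp Require Import all_boot all_order all_algebra.
From mathcomp Require Import all_classical all_reals all_analysis.
From mathcomp Require Import ring lra zify.
Import Order.TTheory GRing.Theory Num.Theory.
Import numFieldNormedType.Exports.
Local Open Scope ring_scope.

Section Aux.
Variable R : realType.
Implicit Types p q : {poly R}.

Definition Nr (r : R) p := \sum_(i < size p) `|p`_i| * r ^+ i.

Lemma NrE r p m : (size p <= m)%N -> Nr r p = \sum_(i < m) `|p`_i| * r ^+ i.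
Proof.
move=> hm; rewrite /Nr (big_ord_widen _ (fun i => `|p`_i| * r ^+ i) hm).
rewrite big_mkcond /=; apply: eq_bigr => i _.
case: ifP => // /negbT; rewrite -leqNgt => hi.
by rewrite nth_default // normr0 mul0r.
Qed.

Lemma norm1E p : norm1 p = Nr 1 p.
Proof. by rewrite /norm1 /Nr; apply: eq_bigr => i _; rewrite expr1n mulr1. Qed.

Lemma Nr_add r p q : 0 <= r -> Nr r (p + q) <= Nr r p + Nr r q.
Proof.
move=> r0; set m := maxn (size p) (size q).
rewrite (@NrE r _ _ (size_polyD p q)) (@NrE r p m) ?leq_maxl // (@NrE r q m) ?leq_maxr //.
rewrite -big_split /=; apply: ler_sum => i _.
by rewrite coefD -mulrDl ler_wpM2r ?exprn_ge0 // ler_normD.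
Qed.

Lemma Nr_scale r c p : Nr r (c *: p) = `|c| * Nr r p.
Proof.
rewrite (@NrE r _ _ (size_scale_leq c p)) /Nr mulr_sumr; apply: eq_bigr => i _.
by rewrite coefZ normrM mulrA.
Qed.

Lemma Nr_opp r p : Nr r (- p) = Nr r p.
Proof. by rewrite -scaleN1r Nr_scale normrN normr1 mul1r. Qed.

Lemma Nr_mulX r p : Nr r ('X * p) = r * Nr r p.
Proof.
have hs : (size ('X * p)%R <= (size p).+1)%N.
  by apply: (leq_trans (size_polyMleq _ _)); rewrite size_polyX.
rewrite (@NrE r _ _ hs) big_ord_recl /= coefXM eqxx normr0 mul0r add0r /Nr mulr_sumr.
apply: eq_bigr => i _; rewrite coefXM /= exprS; ring.
Qed.

Lemma Nr_C r c : Nr r c%:P = `|c|.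
Proof. by rewrite (@NrE r _ _ (size_polyC_leq1 c)) big_ord1 coefC /= mulr1. Qed.

Lemma Nr_Xn r k : Nr r ('X^k) = r ^+ k.
Proof.
elim: k => [|k IH]; first by rewrite expr0 -polyC1 Nr_C normr1.
by rewrite exprS Nr_mulX IH exprS.
Qed.

Lemma Nr_sub r p q : 0 <= r -> Nr r (p - q) <= Nr r p + Nr r q.
Proof. by move=> r0; rewrite -(Nr_opp r q); apply: Nr_add. Qed.

Lemma abs_horner_le p x : `|p.[x]| <= Nr `|x| p.
Proof.
rewrite (horner_coef_wide x (leqnn (size p))) /Nr.
apply: le_trans (ler_norm_sum _ _ _) _; apply: ler_sum => i _.
by rewrite normrM normrX.
Qed.

Lemma cheb_pair2 k : (cheb_pair R k).2 = cheb R k.+1.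
Proof. by elim: k => [//|k _]; rewrite /cheb /=; case: (cheb_pair R k). Qed.

Lemma cheb0 : cheb R 0 = 1. Proof. by []. Qed.
Lemma cheb1 : cheb R 1 = 'X. Proof. by []. Qed.
Lemma chebSS k : cheb R k.+2 = 2%:P * 'X * cheb R k.+1 - cheb R k.
Proof.
by rewrite /cheb /=; case: (cheb_pair R k).
Qed.


Lemma size_cheb k : (size (cheb R k) <= k.+1)%N.
Proof.
suff H : forall k, (size (cheb R k) <= k.+1)%N /\ (size (cheb R k.+1) <= k.+2)%N by case: (H k).
elim=> [|j [IH1 IH2]]; first by rewrite cheb0 cheb1 size_polyX size_polyC oner_neq0.
split=> //; rewrite chebSS.
apply: leq_trans (size_polyD _ _) _; rewrite size_polyN geq_max; apply/andP; split; last first.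
  by apply: leq_trans IH1 _; lia.
apply: leq_trans (size_polyMleq _ _) _.
have h1 : (size (2%:P * 'X : {poly R})%R <= 2)%N.
  by rewrite mul_polyC; apply: leq_trans (size_scale_leq _ _) _; rewrite size_polyX.
move: (size (2%:P * 'X : {poly R})%R) (size (cheb R j.+1)) IH2 h1 => a b; lia.
Qed.

Lemma cheb_evalSS k y : (cheb R k.+2).[y] = 2 * y * (cheb R k.+1).[y] - (cheb R k).[y].
Proof. by rewrite chebSS !hornerE. Qed.

Lemma cheb_eval0 y : (cheb R 0).[y] = 1. Proof. by rewrite cheb0 hornerE. Qed.
Lemma cheb_eval1 y : (cheb R 1).[y] = y. Proof. by rewrite cheb1 hornerE. Qed.

Lemma cheb_inv k y : (cheb R k.+1).[y] ^+ 2 - 2 * y * (cheb R k.+1).[y] * (cheb R k).[y]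
   + (cheb R k).[y] ^+ 2 = 1 - y ^+ 2.
Proof.
elim: k => [|k IH]; first by rewrite cheb_eval0 cheb_eval1; ring.
rewrite cheb_evalSS; rewrite -IH; ring.
Qed.

Lemma cheb_pm1 k y : y ^+ 2 = 1 -> (cheb R k).[y] = y ^+ k.
Proof.
move=> hy.
suff H : forall k, (cheb R k).[y] = y ^+ k /\ (cheb R k.+1).[y] = y ^+ k.+1 by case: (H k).
elim=> [|j [IH1 IH2]]; first by rewrite cheb_eval0 cheb_eval1 expr0 expr1.
split=> //; rewrite cheb_evalSS IH1 IH2.
have -> : 2 * y * y ^+ j.+1 = 2 * (y ^+ 2 * y ^+ j) by rewrite exprS expr2; ring.
have -> : y ^+ j.+2 = y ^+ 2 * y ^+ j by rewrite -exprD addnC addn2.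
rewrite hy; ring.
Qed.

Lemma cheb_bound k y : -1 <= y <= 1 -> `|(cheb R k).[y]| <= 1.
Proof.
move=> /andP[h1 h2].
have [hy|hy] : y ^+ 2 = 1 \/ y ^+ 2 < 1.
  have : y ^+ 2 <= 1 by nra.
  by rewrite le_eqVlt => /orP[/eqP ->|->]; [left|right].
  rewrite cheb_pm1 // normrX.
  have -> : `|y| = 1 by apply/eqP; rewrite -(@eqrXn2 _ 2) ?normr_ge0 // ?expr1n ?real_normK ?hy ?num_real //.
  by rewrite expr1n.
case: k => [|k]; first by rewrite cheb_eval0 normr1.
have := cheb_inv k y; set t := (cheb R k.+1).[y]; set u := (cheb R k).[y] => e.
have h3 : 0 <= (1 - y ^+ 2) * (1 - t ^+ 2).
  have -> : (1 - y ^+ 2) * (1 - t ^+ 2) = (u - y * t) ^+ 2.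
    apply/eqP; rewrite -subr_eq0.
    have -> : (1 - y ^+ 2) * (1 - t ^+ 2) - (u - y * t) ^+ 2 =
       (1 - y ^+ 2) - (t ^+ 2 - 2 * y * t * u + u ^+ 2) by ring.
    by rewrite e subrr.
  exact: sqr_ge0.
have : t ^+ 2 <= 1.
  by move: h3; rewrite pmulr_rge0 ?subr_ge0 ?subr_gt0.
by rewrite -ler_sqrt ?sqrtr_sqr ?sqrtr1 //; apply: sqr_ge0.
Qed.

Lemma cheb_closed k y w v : w * v = 1 -> w + v = 2 * y ->
  (cheb R k).[y] = (w ^+ k + v ^+ k) / 2.
Proof.
move=> h1 h2.
suff H : forall k, (cheb R k).[y] = (w ^+ k + v ^+ k) / 2 /\
   (cheb R k.+1).[y] = (w ^+ k.+1 + v ^+ k.+1) / 2 by case: (H k).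
elim=> [|j [IH1 IH2]].
  by rewrite cheb_eval0 cheb_eval1 !expr0 !expr1 h2; split; field.
split=> //; rewrite cheb_evalSS IH1 IH2 !exprS.
rewrite -h2.
apply/eqP; rewrite -subr_eq0.
set A := w ^+ j; set B := v ^+ j.
have -> : (w + v) * ((w * A + v * B) / 2) - (A + B) / 2 - (w * (w * A) + v * (v * B)) / 2
   = (w * v - 1) * (A + B) / 2 by ring.
by rewrite h1 subrr !mul0r.
Qed.



Lemma Nr_cheb k r w1 w2 : 0 <= r -> w1 + w2 = 2 * r ->
  w1 ^+ 2 = 2 * r * w1 + 1 -> w2 ^+ 2 = 2 * r * w2 + 1 ->
  Nr r (cheb R k) <= (w1 ^+ k + w2 ^+ k) / 2.
Proof.
move=> r0 hs e1 e2.
suff H : forall k, Nr r (cheb R k) <= (w1 ^+ k + w2 ^+ k) / 2 /\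
   Nr r (cheb R k.+1) <= (w1 ^+ k.+1 + w2 ^+ k.+1) / 2 by case: (H k).
elim=> [|j [IH1 IH2]].
  rewrite cheb0 cheb1 -polyC1 Nr_C -[X in Nr r X]mulr1 Nr_mulX Nr_C normr1 !expr0 !expr1 hs.
  by split; lra.
split=> //; rewrite chebSS.
apply: le_trans (Nr_sub _ _ _ r0) _.
rewrite -mulrA mul_polyC Nr_scale Nr_mulX normr_nat.
have -> : w1 ^+ j.+2 = 2 * r * w1 ^+ j.+1 + w1 ^+ j.
  by rewrite -addn2 exprD e1 exprS; ring.
have -> : w2 ^+ j.+2 = 2 * r * w2 ^+ j.+1 + w2 ^+ j.
  by rewrite -addn2 exprD e2 exprS; ring.
have h2r : 0 <= 2 * r by rewrite mulr_ge0.
have := ler_wpM2l h2r IH2.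
move: IH1; set a := Nr r _; set b := Nr r _; lra.
Qed.


Lemma supabs_le rho p M : 0 <= rho ->
  (forall x, 0 <= x <= rho -> `|p.[x]| <= M) -> supabs rho p <= M.
Proof.
move=> r0 hM; apply: ge_sup.
  by exists `|p.[0]|; exists 0 => //; rewrite lexx r0.
by move=> y [x hx ->]; apply: hM.
Qed.

Lemma supabs_ge0 rho p : 0 <= rho -> 0 <= supabs rho p.
Proof.
move=> r0; rewrite /supabs.
set E := (X in sup X).
have hE : E `|p.[0]|.
  by exists 0 => //; rewrite lexx r0.
have [ub|nub] := pselect (has_ubound E).
  exact: le_trans (normr_ge0 _) (ub_le_sup ub hE).
rewrite sup_out // => -[_ hh]; exact: nub hh.
Qed.

Lemma rt_le k rho C p M : 0 <= rho -> (size p <= k.+1)%N -> p.[1] = 1 ->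
  norm1 p <= C -> (forall x, 0 <= x <= rho -> `|p.[x]| <= M) ->
  rho_tilde k rho C <= M.
Proof.
move=> r0 hs h1 hn hM.
apply: (le_trans _ (@supabs_le rho p M r0 hM)).
apply: ge_inf; last by exists p.
by exists 0 => m [q [_ _ _ ->]]; exact: supabs_ge0.
Qed.


Lemma key k rho a A B p0 q M0 Mq : 0 <= rho -> 0 <= a ->
  (size p0 <= k.+1)%N -> p0.[1] = 1 -> norm1 p0 <= A ->
  (forall x, 0 <= x <= rho -> `|p0.[x]| <= M0) ->
  (size q <= k.+1)%N -> q.[1] = 1 -> norm1 q <= B ->
  (forall x, 0 <= x <= rho -> `|q.[x]| <= Mq) ->
  M0 + 3 * a * (k%:R) ^+ 2 * A ^+ 2 < rho ^+ k ->
  Mq + 3 * a * (k%:R) ^+ 2 * B ^+ 2 < rho ^+ k ->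
  forall C, A <= C <= B -> rho_hat k rho a C < rho ^+ k.
Proof.
move=> r0 a0 s0 e0 n0 b0 s1 e1 n1 b1 hA hB C /andP[hAC hCB].
rewrite /rho_hat.
set K := 3 * a * (k%:R) ^+ 2.
have K0 : 0 <= K by rewrite /K !mulr_ge0 // ?sqr_ge0.
have [eAB|nAB] := eqVneq A B.
  have eC : C = A by apply/le_anti; rewrite hAC eAB hCB.
  have h := @rt_le k rho C p0 M0 r0 s0 e0 (le_trans n0 hAC) b0.
  by rewrite eC -/K; apply: le_lt_trans hA; rewrite lerD2r -eC.
have AB : A < B by rewrite lt_neqAle nAB (le_trans hAC hCB).
pose l := (B - C) / (B - A).
have l0 : 0 <= l by rewrite divr_ge0 // subr_ge0 // ltW.
have l1 : l <= 1 by rewrite ler_pdivrMr ?subr_gt0 // mul1r lerD2l lerN2.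
have hC : C = l * A + (1 - l) * B by rewrite /l; field; rewrite subr_eq0 eq_sym.
clearbody l.
pose p := l *: p0 + (1 - l) *: q.
have hs : (size p <= k.+1)%N.
  apply: leq_trans (size_polyD _ _) _; rewrite geq_max; apply/andP; split.
    exact: leq_trans (size_scale_leq _ _) s0.
  exact: leq_trans (size_scale_leq _ _) s1.
have he : p.[1] = 1 by rewrite /p !hornerE e0 e1; ring.
have hn : norm1 p <= C.
  rewrite hC /p norm1E; apply: le_trans (Nr_add _ _ _ ler01) _.
  rewrite !Nr_scale -!norm1E (ger0_norm l0) ger0_norm ?subr_ge0 //.
  by apply: lerD; apply: ler_wpM2l => //; rewrite subr_ge0.
have hb : forall x, 0 <= x <= rho -> `|p.[x]| <= l * M0 + (1 - l) * Mq.
  move=> x hx; rewrite /p !hornerE; apply: le_trans (ler_normD _ _) _.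
  have h0 := b0 x hx; have h1 := b1 x hx; have hl1 : 0 <= 1 - l by rewrite subr_ge0.
  rewrite !normrM (ger0_norm l0) (ger0_norm hl1).
  by apply: lerD; apply: ler_wpM2l.
have hr := @rt_le k rho C p _ r0 hs he hn hb.
have hK : K * C ^+ 2 <= l * (K * A ^+ 2) + (1 - l) * (K * B ^+ 2).
  rewrite -subr_ge0.
  have -> : l * (K * A ^+ 2) + (1 - l) * (K * B ^+ 2) - K * C ^+ 2 =
     K * (l * (1 - l)) * (A - B) ^+ 2 by rewrite hC; ring.
  apply: mulr_ge0; last exact: sqr_ge0.
  by apply: mulr_ge0 => //; apply: mulr_ge0 => //; rewrite subr_ge0.
have hl1 : 0 <= 1 - l by rewrite subr_ge0.
move: hA hB; rewrite -/K => hA hB.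
set t := rho ^+ k.
have hcomb : l * (M0 + K * A ^+ 2) + (1 - l) * (Mq + K * B ^+ 2) < l * t + (1 - l) * t.
  case: (eqVneq l 0) => [->|ln0]; first by rewrite !mul0r !add0r subr0 !mul1r.
  apply: ltr_leD; first by rewrite ltr_pM2l // lt_neqAle eq_sym ln0 l0.
  by rewrite ler_wpM2l // ltW.
have -> : t = l * t + (1 - l) * t by ring.
apply: le_lt_trans hcomb.
have -> : l * (M0 + K * A ^+ 2) + (1 - l) * (Mq + K * B ^+ 2) =
   (l * M0 + (1 - l) * Mq) + (l * (K * A ^+ 2) + (1 - l) * (K * B ^+ 2)) by ring.
exact: lerD hr hK.
Qed.



Lemma cheb_pos k w y : 0 < w -> w + w^-1 = 2 * y ->
  [/\ (cheb R k).[y] = (w ^+ k + (w^-1) ^+ k) / 2, 0 < (cheb R k).[y] &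
       2 * w ^+ k / (1 + w ^+ (2 * k)) * (cheb R k).[y] = 1].
Proof.
move=> w0 h.
have wn0 : w != 0 by rewrite gt_eqF.
have e := @cheb_closed k y w w^-1 (mulfV wn0) h.
have B0 : 0 < w ^+ k by rewrite exprn_gt0.
have Bn0 : w ^+ k != 0 by rewrite gt_eqF.
split => //.
  by rewrite e divr_gt0 // addr_gt0 // exprn_gt0 // invr_gt0.
rewrite e exprVn mulnC exprM.
have h1 : 1 + (w ^+ k) ^+ 2 != 0 by rewrite gt_eqF // ltr_pwDl // sqr_ge0.
by field; rewrite Bn0 h1.
Qed.

Lemma p0_ex k rho : (0 < k)%N -> 0 <= rho -> rho ^+ k < 2 ->
  exists p : {poly R}, [/\ (size p <= k.+1)%N, p.[1] = 1,
    norm1 p <= (2 + rho ^+ k) / (2 - rho ^+ k) &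
    forall x, 0 <= x <= rho -> `|p.[x]| <= rho ^+ k / (2 - rho ^+ k)].
Proof.
move=> k0 r0 hP.
set P := rho ^+ k.
have P0 : 0 <= P by rewrite exprn_ge0.
set t := P / 2.
have t1 : 0 < 1 - t by rewrite subr_gt0 /t ltr_pdivrMr // mul1r.
exists ((1 - t)^-1 *: ('X^k - t%:P)); split.
- apply: leq_trans (size_scale_leq _ _) _.
  apply: leq_trans (size_polyD _ _) _; rewrite size_polyN size_polyXn geq_max leqnn /=.
  by apply: leq_trans (size_polyC_leq1 _) _.
- by rewrite !hornerE expr1n mulrC mulfV // gt_eqF.
- rewrite norm1E Nr_scale; apply: le_trans (ler_wpM2l (normr_ge0 _) (Nr_sub _ _ _ ler01)) _.
  have ti : 0 <= (1 - t)^-1 by rewrite invr_ge0 ltW.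
  have t0 : 0 <= t by rewrite divr_ge0.
  rewrite Nr_Xn Nr_C expr1n (ger0_norm ti) (ger0_norm t0).
  have h2 : 2 - P != 0 by rewrite gt_eqF // subr_gt0.
  have h3 : 1 - t != 0 by rewrite gt_eqF.
  rewrite le_eqVlt; apply/orP; left; apply/eqP; move: h3; rewrite /t => h3.
  by field; rewrite h2 /=.
- move=> x /andP[x0 xr].
  have hx : 0 <= x ^+ k <= P by rewrite exprn_ge0 // lerXn2r // nnegrE.
  have ti : 0 <= (1 - t)^-1 by rewrite invr_ge0 ltW.
  rewrite !hornerE normrM (ger0_norm ti).
  have hn : `|x ^+ k - t| <= t.
    rewrite ler_norml; move: hx; rewrite /t; case/andP => ha hb.
    apply/andP; split; lra.
  apply: (@le_trans _ _ ((1 - t)^-1 * t)); first by rewrite ler_wpM2l.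
  have h2 : 2 - P != 0 by rewrite gt_eqF // subr_gt0.
  have h3 : 1 - t != 0 by rewrite gt_eqF.
  rewrite le_eqVlt; apply/orP; left; apply/eqP; move: h3; rewrite /t => h3.
  by field; rewrite h2 /=.
Qed.


Lemma q1_ex k rho : 0 < rho < 1 ->
  exists q : {poly R}, [/\ (size q <= k.+1)%N, q.[1] = 1,
    norm1 q <= C_1 k rho &
    forall x, 0 <= x <= rho -> `|q.[x]| <= rho_1 k rho].
Proof.
case/andP=> r0 r1.
have rn0 : rho != 0 by rewrite gt_eqF.
set u := Num.sqrt (1 + rho); set v := Num.sqrt (1 - rho).
have hu : u ^+ 2 = 1 + rho by rewrite sqr_sqrtr //; lra.
have hv : v ^+ 2 = 1 - rho by rewrite sqr_sqrtr //; lra.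
have v0 : 0 <= v by rewrite sqrtr_ge0.
have uv : v < u by rewrite ltr_sqrt; lra.
set w := beta_rho rho.
have ew : w = (u - v) / (u + v) by [].
have w0 : 0 < w by rewrite ew divr_gt0 //; lra.
have hw : w + w^-1 = 2 * rho^-1.
  have h1 : u + v != 0 by rewrite gt_eqF //; lra.
  have h2 : u - v != 0 by rewrite gt_eqF //; lra.
  have h3 : u ^+ 2 - v ^+ 2 != 0 by rewrite hu hv; rewrite gt_eqF //; lra.
  have -> : w + w^-1 = (2 * u ^+ 2 + 2 * v ^+ 2) / (u ^+ 2 - v ^+ 2).
    by rewrite ew invf_div; field; rewrite h1 h2 h3.
  rewrite hu hv; field; rewrite rn0 /=.
  have -> : 1 + rho - (1 - rho) = 2 * rho by ring.
  by rewrite mulf_neq0.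
have [eT T0 e1] := @cheb_pos k w rho^-1 w0 hw.
set T := (cheb R k).[rho^-1] in eT T0 e1.
have e1' : rho_1 k rho * T = 1 := e1.
have c0 : 0 < rho_1 k rho.
  have : 0 < rho_1 k rho * T by rewrite e1' ltr01.
  by rewrite pmulr_lgt0.
pose q := rho_1 k rho *: \poly_(i < k.+1) ((cheb R k)`_i * rho^-1 ^+ i).
have qe : forall x, q.[x] = rho_1 k rho * (cheb R k).[rho^-1 * x].
  move=> x; rewrite /q hornerZ horner_poly (horner_coef_wide _ (size_cheb k)).
  congr (_ * _); apply: eq_bigr => i _; rewrite exprMn; ring.
exists q; split.
- exact: leq_trans (size_scale_leq _ _) (size_poly _ _).
- by rewrite qe mulr1.
- rewrite /q norm1E Nr_scale (ger0_norm (ltW c0)).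
  rewrite (@NrE 1 _ _ (size_poly _ _)).
  have -> : \sum_(i < k.+1) `|(\poly_(i0 < k.+1) ((cheb R k)`_i0 * rho^-1 ^+ i0))`_i| * 1 ^+ i
     = Nr rho^-1 (cheb R k).
    rewrite (@NrE rho^-1 _ _ (size_cheb k)); apply: eq_bigr => i _.
    have ri : 0 <= rho^-1 by rewrite invr_ge0 ltW.
    by rewrite coef_poly ltn_ord expr1n mulr1 normrM normrX (ger0_norm ri).
  set s := Num.sqrt (1 + rho ^+ 2).
  have hs : s ^+ 2 = 1 + rho ^+ 2 by rewrite sqr_sqrtr // addr_ge0 // sqr_ge0.
  have hN := @Nr_cheb k rho^-1 ((1 + s) / rho) ((1 - s) / rho).
  have ri : 0 <= rho^-1 by rewrite invr_ge0 ltW.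
  have hsum : (1 + s) / rho + (1 - s) / rho = 2 * rho^-1 by field.
  have hw1 : ((1 + s) / rho) ^+ 2 = 2 * rho^-1 * ((1 + s) / rho) + 1.
    apply/eqP; rewrite -subr_eq0.
    have -> : ((1 + s) / rho) ^+ 2 - (2 * rho^-1 * ((1 + s) / rho) + 1) =
       (s ^+ 2 - 1 - rho ^+ 2) / rho ^+ 2 by field.
    by rewrite hs; apply/eqP; field.
  have hw2 : ((1 - s) / rho) ^+ 2 = 2 * rho^-1 * ((1 - s) / rho) + 1.
    apply/eqP; rewrite -subr_eq0.
    have -> : ((1 - s) / rho) ^+ 2 - (2 * rho^-1 * ((1 - s) / rho) + 1) =
       (s ^+ 2 - 1 - rho ^+ 2) / rho ^+ 2 by field.
    by rewrite hs; apply/eqP; field.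
  have := hN ri hsum hw1 hw2 => hb.
  apply: (@le_trans _ _ (rho_1 k rho * ((((1 + s) / rho) ^+ k + ((1 - s) / rho) ^+ k) / 2))).
    by rewrite ler_wpM2l // ltW.
  have rk : rho ^+ k != 0 by rewrite expf_neq0.
  rewrite /C_1 -/s !expr_div_n le_eqVlt; apply/orP; left; apply/eqP.
  by field.
- move=> x /andP[x0 xr].
  rewrite qe normrM (ger0_norm (ltW c0)) -[X in _ <= X]mulr1 ler_wpM2l ?(ltW c0) //.
  apply: cheb_bound; apply/andP; split.
    apply: le_trans (_ : 0 <= _); first by rewrite lerN10.
    by rewrite mulr_ge0 // invr_ge0 ltW.
  by rewrite mulrC ler_pdivrMr // mul1r.
Qed.


Lemma pstar_props k (rho : R) : 0 < rho < 1 ->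
  [/\ (size (p_star k rho) <= k.+1)%N, (p_star k rho).[1] = 1 &
    forall x, 0 <= x <= rho -> `|(p_star k rho).[x]| <= rho_star k rho].
Proof.
case/andP=> r0 r1.
have rn0 : rho != 0 by rewrite gt_eqF.
set s := Num.sqrt (1 - rho).
have hs : s ^+ 2 = 1 - rho by rewrite sqr_sqrtr //; lra.
have s0 : 0 <= s by rewrite sqrtr_ge0.
have s1 : s < 1 by rewrite -sqrtr1 ltr_sqrt; lra.
set w := beta_ rho.
have ew : w = (1 - s) / (1 + s) by [].
have w0 : 0 < w by rewrite ew divr_gt0 //; lra.
set z := (2 - rho) / rho.
have hw : w + w^-1 = 2 * z.
  have h1 : 1 + s != 0 by rewrite gt_eqF //; lra.
  have h2 : 1 - s != 0 by rewrite gt_eqF //; lra.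
  have h3 : 1 - s ^+ 2 != 0 by rewrite hs; rewrite gt_eqF //; lra.
  have -> : w + w^-1 = (2 + 2 * s ^+ 2) / (1 - s ^+ 2).
    by rewrite ew invf_div; field; rewrite h1 h2 h3.
  by rewrite hs /z; field; rewrite rn0 /= ?subKr.
have [eT T0 e1] := @cheb_pos k w z w0 hw.
have e1' : rho_star k rho * (cheb R k).[z] = 1 := e1.
have Tn0 : (cheb R k).[z] != 0 by rewrite gt_eqF.
have ec : `|(cheb R k).[(2 - rho) / rho]|^-1 = rho_star k rho.
  rewrite -/z (gtr0_norm T0).
  by rewrite -[RHS]mulr1 -(mulfV Tn0) mulrA e1' mul1r.
have pe : forall x, (p_star k rho).[x] = rho_star k rho * (cheb R k).[2 / rho * x - 1].
  by move=> x; rewrite /p_star hornerZ horner_comp ec !hornerE.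
have c0 : 0 < rho_star k rho by rewrite -ec invr_gt0 normr_gt0.
split.
- rewrite /p_star; apply: leq_trans (size_scale_leq _ _) _.
  apply: leq_trans (size_comp_poly_leq _ _) _.
  have h1 : (size ((2 / rho) *: 'X - 1 : {poly R})%R <= 2)%N.
    apply: leq_trans (size_polyD _ _) _; rewrite size_polyN geq_max.
    apply/andP; split; first by apply: leq_trans (size_scale_leq _ _) _; rewrite size_polyX.
    by rewrite size_polyC; case: (_ != _).
  have h2 := size_cheb k.
  move: h1 h2; move: (size ((2 / rho) *: 'X - 1 : {poly R})%R) (size (cheb R k)) => a b.
  nia.
- rewrite pe; have -> : 2 / rho * 1 - 1 = z by rewrite /z; field.
  exact: e1'.
- move=> x /andP[x0 xr].
  rewrite pe normrM (ger0_norm (ltW c0)) -[X in _ <= X]mulr1 ler_wpM2l ?(ltW c0) //.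
  apply: cheb_bound; apply/andP; split.
    rewrite lerBrDr addrC subrr; apply: mulr_ge0 => //; apply: divr_ge0 => //; exact: ltW.
  rewrite lerBlDr; have : 2 / rho * x <= 2 / rho * rho by rewrite ler_wpM2l // divr_ge0 // ltW.
  by rewrite mulfVK.
Qed.


Lemma b1_bound (a P kk : R) : 0 < P -> P < 1 -> 0 < kk ->
  a < P * (1 - P) * (2 - P) / (3 * kk * (2 + P) ^+ 2) ->
  P / (2 - P) + 3 * a * kk * ((2 + P) / (2 - P)) ^+ 2 < P.
Proof.
move=> P0 P1 k0 h.
have hP2 : 0 < 2 + P by lra.
have D0 : 0 < 3 * kk * (2 + P) ^+ 2 by rewrite !mulr_gt0 // exprn_gt0.
move: h; rewrite ltr_pdivlMr // => h.
rewrite -subr_gt0.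
have h2 : 2 - P != 0 by rewrite gt_eqF //; lra.
have -> : P - (P / (2 - P) + 3 * a * kk * ((2 + P) / (2 - P)) ^+ 2) =
   (P * (1 - P) * (2 - P) - a * (3 * kk * (2 + P) ^+ 2)) / (2 - P) ^+ 2.
  by field.
by rewrite divr_gt0 ?subr_gt0 // exprn_gt0 //; lra.
Qed.

Lemma bound_from (a P M B kk : R) : 0 <= a -> 0 < kk ->
  a < (P - M) / (3 * kk * B ^+ 2) -> M + 3 * a * kk * B ^+ 2 < P.
Proof.
move=> a0 k0 h.
have [B0|Bn0] := eqVneq B 0.
  by move: h; rewrite B0 expr0n /= !mulr0 invr0 mulr0 => h; exfalso; move: a0; rewrite leNgt h.
have B2 : 0 < B ^+ 2 by rewrite lt_neqAle sqr_ge0 andbT eq_sym expf_neq0.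
have D0 : 0 < 3 * kk * B ^+ 2 by apply: mulr_gt0 => //; apply: mulr_gt0 => //; rewrite ltr0n.
move: h; rewrite ltr_pdivlMr // => h.
rewrite -subr_gt0.
have -> : P - (M + 3 * a * kk * B ^+ 2) = (P - M) - a * (3 * kk * B ^+ 2) by ring.
by rewrite subr_gt0.
Qed.

End Aux.

Theorem proposition8 (R : realType) (n : nat) (f : 'rV[R]_n -> R)
  (mu L eta : R) (x0 : 'rV[R]_n) (k : nat) :
  is_C2 f -> 0 < mu -> mu < L ->
  strongly_convex mu f -> lipschitz_grad L f -> lipschitz_hessian eta f ->
  (1 <= k)%N ->
  let rho := 1 - mu / L in
  let a := eta / L ^+ 2 * enorm (grad f x0) in
  let C0 := (2 + rho ^+ k) / (2 - rho ^+ k) in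
  let b1 := rho ^+ k * (1 - rho ^+ k) * (2 - rho ^+ k)
            / (3 * (k%:R) ^+ 2 * (2 + rho ^+ k) ^+ 2) in
  [/\ a < b1 ->
        exists lo hi : R, [/\ 1 <= lo, lo < hi, lo <= C0 <= hi &
          forall C, lo <= C <= hi -> rho_hat k rho a C < rho ^+ k],
      a < Num.min b1 ((rho ^+ k - rho_1 k rho) / (3 * (k%:R) ^+ 2 * C_1 k rho ^+ 2)) ->
        forall C, C0 <= C <= C_1 k rho -> rho_hat k rho a C < rho ^+ k &
      a < Num.min b1 ((rho ^+ k - rho_star k rho) / (3 * (k%:R) ^+ 2 * C_star k rho ^+ 2)) ->
        forall C, C0 <= C <= C_star k rho -> rho_hat k rho a C < rho ^+ k].
Proof.
move=> _ mu0 muL _ _ hlh k1 rho a C0 b1.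
have L0 : 0 < L by apply: lt_trans muL.
have ml0 : 0 < mu / L by rewrite divr_gt0.
have ml1 : mu / L < 1 by rewrite ltr_pdivrMr // mul1r.
have r0 : 0 < rho by rewrite /rho subr_gt0.
have r1 : rho < 1 by rewrite /rho; lra.
have P0 : 0 < rho ^+ k by rewrite exprn_gt0.
have P1 : rho ^+ k < 1 by rewrite exprn_ilt1 ?ltW // -lt0n.
have kk0 : 0 < (k%:R : R) ^+ 2 by rewrite exprn_gt0 // ltr0n.
have a0 : 0 <= a.
  rewrite /a; set g := grad f x0.
  have e0 : 0 <= enorm g by rewrite /enorm sqrtr_ge0.
  have [ez|enz] := eqVneq (enorm g) 0; first by rewrite ez mulr0.
  have ep : 0 < enorm g by rewrite lt_neqAle eq_sym enz e0.
  have h := hlh g 0 g; rewrite subr0 in h.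
  have : 0 <= eta * enorm g * enorm g.
    apply: le_trans h; rewrite /enorm sqrtr_ge0 //.
  rewrite pmulr_lge0 // pmulr_lge0 // => eta0.
  by rewrite mulr_ge0 // divr_ge0 // sqr_ge0.
have P2 : rho ^+ k < 2 by lra.
have [p0 [s0 e0 n0 b0]] := @p0_ex R k rho k1 (ltW r0) P2.
have hA : a < b1 -> rho ^+ k / (2 - rho ^+ k) + 3 * a * (k%:R) ^+ 2 * C0 ^+ 2 < rho ^+ k.
  by move=> h; apply: b1_bound.
have r01 : 0 < rho < 1 by rewrite r0 r1.
split.
- move=> hab; have hA0 := hA hab.
  move: hA0; set M0 := rho ^+ k / (2 - rho ^+ k); set K := 3 * a * (k%:R) ^+ 2 => hA0.
  have K0 : 0 <= K by rewrite /K; apply: mulr_ge0; [apply: mulr_ge0 => //; rewrite ler0n | exact: ltW].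
  have hC0 : 1 <= C0 by rewrite /C0 ler_pdivlMr ?mul1r; lra.
  set e := rho ^+ k - (M0 + K * C0 ^+ 2).
  have he : e = rho ^+ k - (M0 + K * C0 ^+ 2) by [].
  have e0' : 0 < e by rewrite /e subr_gt0.
  set d := K * (2 * C0 + 1) + 1.
  have d0 : 0 < d by rewrite /d ltr_wpDl // mulr_ge0 //; lra.
  set eps := Num.min 1 (e / d).
  have eps0 : 0 < eps by rewrite /eps lt_min ltr01 divr_gt0.
  have eps1 : eps <= 1 by rewrite /eps ge_min lexx.
  have epsd : eps <= e / d by rewrite /eps ge_min lexx orbT.
  have h3 : eps * d <= e by rewrite -ler_pdivlMr.
  have h1 : K * eps * (2 * C0 + eps) <= eps * (K * (2 * C0 + 1)).
    rewrite -subr_ge0.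
    have -> : eps * (K * (2 * C0 + 1)) - K * eps * (2 * C0 + eps) = K * eps * (1 - eps) by ring.
    by apply: mulr_ge0; [apply: mulr_ge0 => //; exact: ltW | rewrite subr_ge0].
  have h2 : eps * (K * (2 * C0 + 1)) < eps * d by rewrite ltr_pM2l // /d ltrDl ltr01.
  have hB : M0 + K * (C0 + eps) ^+ 2 < rho ^+ k.
    have -> : K * (C0 + eps) ^+ 2 = K * C0 ^+ 2 + K * eps * (2 * C0 + eps) by ring.
    lra.
  exists C0, (C0 + eps); split => //.
  + by rewrite ltrDl.
  + by rewrite lexx /= lerDl ltW.
  move=> C hC.
  apply: (@key R k rho a C0 (C0 + eps) p0 p0 M0 M0 (ltW r0) a0 s0 e0 _ b0 s0 e0 _ b0 hA0 hB C hC) => //.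
  by apply: le_trans n0 _; rewrite lerDl ltW.
- move=> h C hC; move: h; rewrite lt_min => /andP[h1 h2].
  have [q [sq eq nq bq]] := @q1_ex R k rho r01.
  exact: (@key R k rho a _ _ p0 q _ _ (ltW r0) a0 s0 e0 n0 b0 sq eq nq bq (hA h1)
     (@bound_from R _ _ _ _ _ a0 kk0 h2) C hC).
- move=> h C hC; move: h; rewrite lt_min => /andP[h1 h2].
  have [sq eq bq] := @pstar_props R k rho r01.
  exact: (@key R k rho a _ _ p0 (p_star k rho) _ _ (ltW r0) a0 s0 e0 n0 b0 sq eq (lexx _) bq (hA h1)
     (@bound_from R _ _ _ _ _ a0 kk0 h2) C hC).
Qed.
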